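(* Let $R=\mathbb{F}_q+v\mathbb{F}_q+v^2\mathbb{F}_q$ with $v^3=v$. If $C$ is a formally self-dual code of length $n$ over $R$, then its Gray image $\Psi(C)\subseteq\mathbb{F}_q^{3n}$ is a formally self-dual code over $\mathbb{F}_q$.
   Context: $q$ is a prime power and $R=\mathbb{F}_q[v]/\langle v^3-v\rangle$. A linear code of length $n$ over $R$ is an $R$-submodule of $R^n$; $C^\perp=\{x\in R^n:\sum x_iy_i=0\ \forall y\in C\}$. For $c\in R^n$ written uniquely as $a_0+va_1+v^2a_2$ with $a_i\in\mathbb{F}_q^n$, the Gray map is $\Psi(c)=(a_0,a_0+a_2,a_1)\in\mathbb{F}_q^{3n}$, and the Lee weight $w_L(c)$ is the Hamming weight of $\Psi(c)$. A code $C$ over $R$ is formally self-dual if $C$ and $C^\perp$ have the same Lee weight enumerator $\sum_c X^{3n-w_L(c)}Y^{w_L(c)}$; a linear code $D\subseteq\mathbb{F}_q^{3n}$ is formally self-dual if $D$ and its dual (standard inner product) have the same Hamming weight enumerator. *)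

(* Defs.v *)
From HB Require Import structures.
From mathcomp Require Import all_boot all_order all_algebra.
Set Implicit Arguments. Unset Strict Implicit. Unset Printing Implicit Defensive.
Import GRing.Theory.
Local Open Scope ring_scope.

(* The ring R = F[v]/<v^3 - v>: an element a0 + v a1 + v^2 a2 is the triple
   ((a0, a1), a2).  F is an arbitrary finite field (= F_q, q a prime power). *)
Definition Rel (F : finFieldType) := (F * F * F)%type.

Definition R0 (F : finFieldType) : Rel F := (0, 0, 0).

Definition Radd (F : finFieldType) (a b : Rel F) : Rel F :=
  (a.1.1 + b.1.1, a.1.2 + b.1.2, a.2 + b.2).

(* product using v^3 = v, v^4 = v^2 *)
Definition Rmul (F : finFieldType) (a b : Rel F) : Rel F :=
  let: (a0, a1, a2) := a in let: (b0, b1, b2) := b in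
  (a0 * b0,
   a0 * b1 + a1 * b0 + a1 * b2 + a2 * b1,
   a0 * b2 + a2 * b0 + a1 * b1 + a2 * b2).

(* R^n, a vector c = a0 + v a1 + v^2 a2 with a_i in F^n, stored as ((a0, a1), a2) *)
Definition Rvec (F : finFieldType) (n : nat) :=
  ('rV[F]_n * 'rV[F]_n * 'rV[F]_n)%type.

Definition Rcoord (F : finFieldType) (n : nat) (c : Rvec F n) (i : 'I_n) : Rel F :=
  (c.1.1 0 i, c.1.2 0 i, c.2 0 i).

Definition Rvec_of (F : finFieldType) (n : nat) (f : 'I_n -> Rel F) : Rvec F n :=
  (\row_i (f i).1.1, \row_i (f i).1.2, \row_i (f i).2).

Definition Rvzero (F : finFieldType) (n : nat) : Rvec F n := (0, 0, 0).

Definition Rvadd (F : finFieldType) (n : nat) (c d : Rvec F n) : Rvec F n :=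
  Rvec_of (fun i => Radd (Rcoord c i) (Rcoord d i)).

Definition Rscale (F : finFieldType) (n : nat) (r : Rel F) (c : Rvec F n) : Rvec F n :=
  Rvec_of (fun i => Rmul r (Rcoord c i)).

Definition Rlinear_code (F : finFieldType) (n : nat) (C : {set Rvec F n}) : Prop :=
  [/\ Rvzero F n \in C,
      (forall c d, c \in C -> d \in C -> Rvadd c d \in C) &
      (forall (r : Rel F) c, c \in C -> Rscale r c \in C)].

Definition Rdot (F : finFieldType) (n : nat) (x y : Rvec F n) : Rel F :=
  \big[@Radd F/R0 F]_(i < n) Rmul (Rcoord x i) (Rcoord y i).

Definition Rdual (F : finFieldType) (n : nat) (C : {set Rvec F n}) : {set Rvec F n} :=
  [set x | [forall y in C, Rdot x y == R0 F]].

Definition gray (F : finFieldType) (n : nat) (c : Rvec F n) : 'rV[F]_(n + n + n) :=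
  row_mx (row_mx c.1.1 (c.1.1 + c.2)) c.1.2.

Definition gray_image (F : finFieldType) (n : nat) (C : {set Rvec F n})
  : {set 'rV[F]_(n + n + n)} := [set gray c | c in C].

Definition hweight (F : finFieldType) (N : nat) (x : 'rV[F]_N) : nat :=
  #|[set i : 'I_N | x 0 i != 0]|.

Definition lee_weight (F : finFieldType) (n : nat) (c : Rvec F n) : nat :=
  hweight (gray c).

(* weight enumerator  sum_{c in A} X^(N - w c) Y^(w c)  as an element of
   Z[X][Y] = {poly {poly int}} (inner variable X, outer variable Y) *)
Definition wenum (T : finType) (N : nat) (A : {set T}) (w : T -> nat)
  : {poly {poly int}} :=
  \sum_(c in A) ('X^(N - w c))%:P * 'X^(w c).

Definition R_formally_self_dual (F : finFieldType) (n : nat) (C : {set Rvec F n}) : Prop :=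
  wenum (n + n + n) C (@lee_weight F n) = wenum (n + n + n) (Rdual C) (@lee_weight F n).

Definition F_linear_code (F : finFieldType) (N : nat) (D : {set 'rV[F]_N}) : Prop :=
  [/\ 0 \in D,
      (forall x y, x \in D -> y \in D -> x + y \in D) &
      (forall (a : F) x, x \in D -> a *: x \in D)].

Definition Fdual (F : finFieldType) (N : nat) (D : {set 'rV[F]_N}) : {set 'rV[F]_N} :=
  [set x : 'rV[F]_N | [forall y in D, \sum_(i < N) x 0 i * (y : 'rV[F]_N) 0 i == 0]].

Definition F_formally_self_dual (F : finFieldType) (N : nat) (D : {set 'rV[F]_N}) : Prop :=
  wenum N D (@hweight F N) = wenum N (Fdual D) (@hweight F N).

(* Main.v *)
Require Import Defs.
From mathcomp Require Import all_boot all_order all_algebra.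
From mathcomp Require Import ring.
Set Implicit Arguments. Unset Strict Implicit. Unset Printing Implicit Defensive.
Import GRing.Theory.
Local Open Scope ring_scope.

Section S.
Variables (F : finFieldType) (n : nat).

Definition ginv (z : 'rV[F]_(n + n + n)) : Rvec F n :=
  (lsubmx (lsubmx z), rsubmx z, rsubmx (lsubmx z) - lsubmx (lsubmx z)).

Lemma grayK (c : Rvec F n) : ginv (gray c) = c.
Proof.
case: c => [[a0 a1] a2]; rewrite /ginv /gray /=.
rewrite (@row_mxKl _ 1 (n+n) n) (@row_mxKr _ 1 (n+n) n) !row_mxKl row_mxKr.
by rewrite addrC addKr.
Qed.

Lemma ginvK z : gray (ginv z) = z.
Proof. by rewrite /ginv /gray /= addrC subrK !hsubmxK. Qed.

Lemma gray_inj : injective (@gray F n).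
Proof. exact: can_inj grayK. Qed.

Lemma RdotE (x y : Rvec F n) :
  Rdot x y = (\sum_i (Rmul (Rcoord x i) (Rcoord y i)).1.1,
              \sum_i (Rmul (Rcoord x i) (Rcoord y i)).1.2,
              \sum_i (Rmul (Rcoord x i) (Rcoord y i)).2).
Proof.
rewrite /Rdot.
have h1 := (big_morph (op2 := @Radd F) (id2 := R0 F) (fun p : Rel F => p.1.1) (id1 := 0) (op1 := +%R)
   (fun a b => erefl) (erefl : (R0 F).1.1 = 0)).
have h2 := (big_morph (op2 := @Radd F) (id2 := R0 F) (fun p : Rel F => p.1.2) (id1 := 0) (op1 := +%R)
   (fun a b => erefl) (erefl : (R0 F).1.2 = 0)).
have h3 := (big_morph (op2 := @Radd F) (id2 := R0 F) (fun p : Rel F => p.2) (id1 := 0) (op1 := +%R)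
   (fun a b => erefl) (erefl : (R0 F).2 = 0)).
by rewrite -h1 -h2 -h3; case: (\big[_/_]_(_ < _) _) => [[]].
Qed.

Definition fdot (x y : 'rV[F]_(n + n + n)) := \sum_(i < n + n + n) x 0 i * y 0 i.

Lemma fdotE (x y : Rvec F n) : fdot (gray x) (gray y) =
  \sum_i (x.1.1 0 i * y.1.1 0 i + (x.1.1 0 i + x.2 0 i) * (y.1.1 0 i + y.2 0 i)
          + x.1.2 0 i * y.1.2 0 i).
Proof.
rewrite /fdot /gray !big_split_ord /= -!big_split /=.
apply: eq_bigr => i _.
by rewrite !row_mxEl !row_mxEr !mxE.
Qed.


Lemma RscaleE (r : Rel F) (y : Rvec F n) i :
  Rcoord (Rscale r y) i = Rmul r (Rcoord y i).
Proof. by rewrite /Rcoord /Rscale /Rvec_of /= !mxE; case: (Rmul _ _) => [[]]. Qed.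

Definition S0 (x y : Rvec F n) := \sum_i (Rmul (Rcoord x i) (Rcoord y i)).1.1.
Definition S1 (x y : Rvec F n) := \sum_i (Rmul (Rcoord x i) (Rcoord y i)).1.2.
Definition S2 (x y : Rvec F n) := \sum_i (Rmul (Rcoord x i) (Rcoord y i)).2.

Lemma fdot_plain x y : fdot (gray x) (gray y) = S0 x y + S0 x y + S2 x y.
Proof.
rewrite fdotE /S0 /S2 -!big_split; apply: eq_bigr => i _.
rewrite /Rcoord /=; ring.
Qed.

Lemma fdot_v2 x y : fdot (gray x) (gray (Rscale (0, 0, 1) y)) = S0 x y + S2 x y.
Proof.
rewrite fdotE /S0 /S2 -!big_split; apply: eq_bigr => i _.
have E := RscaleE (0, 0, 1) y i; rewrite /Rcoord in E.
case: E => -> -> ->; rewrite /Rcoord /=; ring.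
Qed.

Lemma fdot_v x y : fdot (gray x) (gray (Rscale (0, 1, 0) y)) = S1 x y.
Proof.
rewrite fdotE /S1; apply: eq_bigr => i _.
have E := RscaleE (0, 1, 0) y i; rewrite /Rcoord in E.
case: E => -> -> ->; rewrite /Rcoord /=; ring.
Qed.

Lemma Rdot0 x y : (Rdot x y == R0 F) = [&& S0 x y == 0, S1 x y == 0 & S2 x y == 0].
Proof. by rewrite RdotE /R0 !xpair_eqE andbA. Qed.

Lemma dual_gray (C : {set Rvec F n}) : Rlinear_code C ->
  Fdual (gray_image C) = gray_image (Rdual C).
Proof.
case=> _ _ Csc; apply/setP => z; rewrite -(ginvK z); set x := ginv z.
rewrite /gray_image (mem_imset _ _ gray_inj) inE in_set.
apply/forallP/forallP => H y; apply/implyP => yC.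
- have := H (gray y); rewrite (mem_imset _ _ gray_inj) yC /= => /eqP h0.
  have := H (gray (Rscale (0,0,1) y)).
  rewrite (mem_imset _ _ gray_inj) Csc //= => /eqP h2.
  have := H (gray (Rscale (0,1,0) y)).
  rewrite (mem_imset _ _ gray_inj) Csc //= => /eqP h1.
  change (fdot (gray x) (gray y) = 0) in h0.
  change (fdot (gray x) (gray (Rscale (0,0,1) y)) = 0) in h2.
  change (fdot (gray x) (gray (Rscale (0,1,0) y)) = 0) in h1.
  rewrite fdot_plain in h0; rewrite fdot_v2 in h2; rewrite fdot_v in h1.
  have e0 : S0 x y = 0.
    have -> : S0 x y = (S0 x y + S0 x y + S2 x y) - (S0 x y + S2 x y) by ring.
    by rewrite h0 h2 subrr.
  rewrite Rdot0 h1 e0 eqxx /=; rewrite e0 add0r in h2; by rewrite h2.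
- case/imsetP: yC => y' y'C ->.
  have := H y'; rewrite y'C /= Rdot0 => /and3P [/eqP a /eqP b /eqP c].
  apply/eqP; change (fdot (gray x) (gray y') = 0).
  by rewrite fdot_plain a c !addr0.
Qed.


Lemma Rvadd_eq (c d : Rvec F n) :
  Rvadd c d = (c.1.1 + d.1.1, c.1.2 + d.1.2, c.2 + d.2).
Proof.
rewrite /Rvadd /Rvec_of; congr (_, _, _); apply/matrixP => i j;
  by rewrite !mxE /Rcoord /= (ord1 i).
Qed.

Lemma Rscale_eq (a : F) (c : Rvec F n) :
  Rscale (a, 0, 0) c = (a *: c.1.1, a *: c.1.2, a *: c.2).
Proof.
rewrite /Rscale /Rvec_of; congr (_, _, _); apply/matrixP => i j;
  rewrite !mxE /Rcoord /= (ord1 i); ring.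
Qed.

Lemma gray_add (c d : Rvec F n) : gray (Rvadd c d) = gray c + gray d.
Proof. by rewrite Rvadd_eq /gray /= !add_row_mx addrACA. Qed.

Lemma gray_scale (a : F) (c : Rvec F n) : gray (Rscale (a, 0, 0) c) = a *: gray c.
Proof. by rewrite Rscale_eq /gray /= !scale_row_mx scalerDr. Qed.

Lemma gray0 : gray (Rvzero F n) = 0.
Proof. by rewrite /gray /= addr0 !row_mx0. Qed.

Lemma wenum_gray (D : {set Rvec F n}) :
  wenum (n + n + n) (gray_image D) (@hweight F _) = wenum (n + n + n) D (@lee_weight F n).
Proof. by rewrite /wenum /gray_image big_imset //; move=> ? ? _ _ /gray_inj. Qed.

End S.

Theorem theorem19 (F : finFieldType) (n : nat) (C : {set Rvec F n}) :
  Rlinear_code C -> R_formally_self_dual C ->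
  F_linear_code (gray_image C) /\ F_formally_self_dual (gray_image C).
Proof.
move=> lC fsd; split.
- case: lC => C0 Cadd Csc; split.
  + by apply/imsetP; exists (Rvzero F n); rewrite ?gray0.
  + move=> x y /imsetP [c cC ->] /imsetP [d dC ->].
    by apply/imsetP; exists (Rvadd c d); rewrite ?gray_add //; apply: Cadd.
  + move=> a x /imsetP [c cC ->].
    by apply/imsetP; exists (Rscale (a, 0, 0) c); rewrite ?gray_scale //; apply: Csc.
- by rewrite /F_formally_self_dual dual_gray // !wenum_gray.
Qed.
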